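(* Let $0<\theta<\pi$ and $\hat T>\theta$, and let $(\hat x,\hat T,\hat u)$ be the reference solution of problem (MD) described in the context. Then for every $\lambda\in\Lambda$: (i) $\alpha_0>0$; (ii) $H_u[\lambda](s)<0$ for all $s\in[0,\theta/\hat T)$.
   Context: Problem (MD) on $s\in[0,1]$, with state $(x_1,x_2,x_3,T)$ and scalar control $u$: minimize $T(0)$ subject to $\dot x_1=-T\sin x_3$, $\dot x_2=T\cos x_3$, $\dot x_3=Tu$, $\dot T=0$ a.e. on $[0,1]$; $x_1(0)=x_2(0)=x_3(0)=0$; $x_1(1)=b_1$, $x_2(1)=b_2$, $x_3(1)=\theta$; $-1\le u(s)\le1$ a.e. (It is the time-rescaled form of minimizing the final time $T$ for $\dot x_1=-\sin x_3$, $\dot x_2=\cos x_3$, $\dot x_3=u$.) Reference solution: $\hat T>\theta$ constant, $\hat u(s)=1$ on $[0,\theta/\hat T]$, $\hat u(s)=0$ on $(\theta/\hat T,1]$; $\hat x_3(s)=\hat Ts$ on $[0,\theta/\hat T]$ and $=\theta$ afterwards; $\hat x_1(s)=\cos(\hat Ts)-1$ on $[0,\theta/\hat T]$ and $=\hat T\sin\theta(\theta/\hat T-s)+\cos\theta-1$ afterwards; $\hat x_2(s)=\sin(\hat Ts)$ on $[0,\theta/\hat T]$ and $=\hat T\cos\theta(s-\theta/\hat T)+\sin\theta$ afterwards; $b_1:=\hat x_1(1)$, $b_2:=\hat x_2(1)$. Pre-Hamiltonian: $H[\lambda](x,T,u,s):=T\big(-\psi_1(s)\sin x_3+\psi_2(s)\cos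 x_3+\psi_3(s)u\big)$. A multiplier is $\lambda=(\alpha_0,\beta^0,\beta^1,\psi,\psi_T)$ with $\alpha_0\in\mathbb R$, $\beta^0,\beta^1\in\mathbb R^3$, $\psi=(\psi_1,\psi_2,\psi_3)$ and $\psi_T$ Lipschitz on $[0,1]$; terminal Lagrangian $\ell:=\alpha_0T(0)+\sum_{j=1}^3\beta^0_jx_j(0)+\sum_{j=1}^3\beta^1_jx_j(1)$. $\Lambda$ is the set of such $\lambda$ with: $\alpha_0\ge0$, $\alpha_0+|\beta^0|+|\beta^1|=1$; $-\dot\psi=H_x[\lambda]$ a.e. along the reference, $\psi(0)=-\beta^0$, $\psi(1)=\beta^1$; $-\dot\psi_T=H_T[\lambda]$ a.e. along the reference, $\psi_T(0)=-\alpha_0$, $\psi_T(1)=0$; and $H[\lambda](\hat x(s),\hat T,\hat u(s),s)=\min_{|v|\le1}H[\lambda](\hat x(s),\hat T,v,s)$ for a.e. $s$. $H_u[\lambda](s)$ denotes $\partial H/\partial u$ along the reference, i.e. $\hat T\psi_3(s)$. *)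

(* Defs.v *)
From Stdlib Require Import Reals Lra.
Open Scope R_scope.

Definition null_set (N : R -> Prop) : Prop :=
  forall eps : R, 0 < eps ->
  exists a b : nat -> R,
    (forall n, a n <= b n) /\
    (forall x, N x -> exists n, a n < x < b n) /\
    (forall n, sum_f_R0 (fun k => b k - a k) n <= eps).

Definition ae01 (P : R -> Prop) : Prop :=
  exists N : R -> Prop, null_set N /\
    forall s, 0 <= s <= 1 -> ~ N s -> P s.

Definition lipschitz01 (f : R -> R) : Prop :=
  exists L : R, forall s t, 0 <= s <= 1 -> 0 <= t <= 1 ->
    Rabs (f s - f t) <= L * Rabs (s - t).

Definition uhat (th Th s : R) : R := if Rle_dec s (th / Th) then 1 else 0.
Definition x3hat (th Th s : R) : R := if Rle_dec s (th / Th) then Th * s else th.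
Definition x1hat (th Th s : R) : R :=
  if Rle_dec s (th / Th) then cos (Th * s) - 1
  else Th * sin th * (th / Th - s) + cos th - 1.
Definition x2hat (th Th s : R) : R :=
  if Rle_dec s (th / Th) then sin (Th * s)
  else Th * cos th * (s - th / Th) + sin th.
Definition b1 (th Th : R) : R := x1hat th Th 1.
Definition b2 (th Th : R) : R := x2hat th Th 1.

(* H[lambda](x,T,u,s) = T(-psi1 sin x3 + psi2 cos x3 + psi3 u), with
   p1 p2 p3 standing for psi1(s) psi2(s) psi3(s). *)
Definition Hpre (p1 p2 p3 x1 x2 x3 T u : R) : R :=
  T * (- p1 * sin x3 + p2 * cos x3 + p3 * u).
Definition H_x1 (p1 p2 p3 x1 x2 x3 T u : R) : R := 0.
Definition H_x2 (p1 p2 p3 x1 x2 x3 T u : R) : R := 0.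
Definition H_x3 (p1 p2 p3 x1 x2 x3 T u : R) : R :=
  T * (- p1 * cos x3 - p2 * sin x3).
Definition H_T (p1 p2 p3 x1 x2 x3 T u : R) : R :=
  - p1 * sin x3 + p2 * cos x3 + p3 * u.
Definition H_u (p1 p2 p3 x1 x2 x3 T u : R) : R := T * p3.

(* Sanity: the partials are the actual partial derivatives of Hpre. *)
Lemma H_x3_correct p1 p2 p3 x1 x2 x3 T u :
  derivable_pt_lim (fun y => Hpre p1 p2 p3 x1 x2 y T u) x3
    (H_x3 p1 p2 p3 x1 x2 x3 T u).
Proof.
  unfold Hpre, H_x3.
  change (fun y => T * (- p1 * sin y + p2 * cos y + p3 * u)) with
    (mult_fct (fct_cte T) (plus_fct (plus_fct (mult_fct (fct_cte (- p1)) sin)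
       (mult_fct (fct_cte p2) cos)) (fct_cte (p3 * u)))).
  pose proof (derivable_pt_lim_mult (fct_cte (- p1)) sin x3 _ _
     (derivable_pt_lim_const (- p1) x3) (derivable_pt_lim_sin x3)) as D1.
  pose proof (derivable_pt_lim_mult (fct_cte p2) cos x3 _ _
     (derivable_pt_lim_const p2 x3) (derivable_pt_lim_cos x3)) as D2.
  pose proof (derivable_pt_lim_plus _ _ x3 _ _ D1 D2) as D3.
  pose proof (derivable_pt_lim_plus _ _ x3 _ _ D3 (derivable_pt_lim_const (p3 * u) x3)) as D4.
  pose proof (derivable_pt_lim_mult _ _ x3 _ _ (derivable_pt_lim_const T x3) D4) as D5.
  unfold fct_cte, plus_fct, mult_fct in D5 |- *.
  replace (T * (- p1 * cos x3 - p2 * sin x3)) with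
    (0 * (- p1 * sin x3 + p2 * cos x3 + p3 * u) +
     T * ((0 * sin x3 + - p1 * cos x3) + (0 * cos x3 + p2 * (- sin x3)) + 0)) by ring.
  exact D5.
Qed.

Lemma H_T_correct p1 p2 p3 x1 x2 x3 T u :
  derivable_pt_lim (fun y => Hpre p1 p2 p3 x1 x2 x3 y u) T
    (H_T p1 p2 p3 x1 x2 x3 T u).
Proof.
  unfold Hpre, H_T.
  pose proof (derivable_pt_lim_mult id (fct_cte (- p1 * sin x3 + p2 * cos x3 + p3 * u)) T _ _
     (derivable_pt_lim_id T) (derivable_pt_lim_const _ T)) as D.
  unfold fct_cte, mult_fct, id in D |- *.
  replace (1 * (- p1 * sin x3 + p2 * cos x3 + p3 * u) + T * 0) with
    (- p1 * sin x3 + p2 * cos x3 + p3 * u) in D by ring.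
  exact D.
Qed.

Definition Href (th Th : R) (psi1 psi2 psi3 : R -> R) (s v : R) : R :=
  Hpre (psi1 s) (psi2 s) (psi3 s)
       (x1hat th Th s) (x2hat th Th s) (x3hat th Th s) Th v.

Definition in_Lambda (th Th : R)
  (a0 b01 b02 b03 b11 b12 b13 : R) (psi1 psi2 psi3 psiT : R -> R) : Prop :=
  0 <= a0 /\
  a0 + sqrt (b01 ^ 2 + b02 ^ 2 + b03 ^ 2) + sqrt (b11 ^ 2 + b12 ^ 2 + b13 ^ 2) = 1 /\
  lipschitz01 psi1 /\ lipschitz01 psi2 /\ lipschitz01 psi3 /\ lipschitz01 psiT /\
  ae01 (fun s =>
    let args := (fun (F : R -> R -> R -> R -> R -> R -> R -> R -> R) =>
       F (psi1 s) (psi2 s) (psi3 s) (x1hat th Th s) (x2hat th Th s)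
         (x3hat th Th s) Th (uhat th Th s)) in
    derivable_pt_lim psi1 s (- args H_x1) /\
    derivable_pt_lim psi2 s (- args H_x2) /\
    derivable_pt_lim psi3 s (- args H_x3) /\
    derivable_pt_lim psiT s (- args H_T)) /\
  psi1 0 = - b01 /\ psi2 0 = - b02 /\ psi3 0 = - b03 /\
  psi1 1 = b11 /\ psi2 1 = b12 /\ psi3 1 = b13 /\
  psiT 0 = - a0 /\ psiT 1 = 0 /\
  ae01 (fun s => forall v, -1 <= v <= 1 ->
    Href th Th psi1 psi2 psi3 s (uhat th Th s) <= Href th Th psi1 psi2 psi3 s v).

(* Main.v *)
Require Import Defs.
From Stdlib Require Import Reals Lra Lia Classical.
From Coquelicot Require Import Coquelicot.
Open Scope R_scope.

Lemma real_ind (a b : R) (P : R -> Prop) : a <= b -> P a ->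
  (forall t, a < t <= b -> (forall s, a <= s < t -> P s) -> P t) ->
  (forall t, a <= t < b -> P t -> exists d, 0 < d /\ forall s, t < s < t + d -> s <= b -> P s) ->
  P b.
Proof.
  intros Hab Pa Hlim Hext.
  set (E := fun t => a <= t <= b /\ forall s, a <= s <= t -> P s).
  assert (Hb : bound E) by (exists b; intros x [Hx _]; lra).
  assert (He : exists x, E x) by (exists a; split; [lra| intros s Hs; replace s with a by lra; exact Pa]).
  destruct (completeness E Hb He) as [c [Hub Hlub]].
  assert (Hac : a <= c) by (apply Hub; destruct He; unfold E; split; [lra| intros s Hs; replace s with a by lra; exact Pa]).
  assert (Hcb : c <= b) by (apply Hlub; intros x [Hx _]; lra).
  assert (Hbelow : forall s, a <= s < c -> P s).
  { intros s Hs. destruct (classic (exists x, E x /\ s < x)) as [[x [[Hx1 Hx2] Hsx]]|Hn].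
    - apply Hx2; lra.
    - exfalso. assert (c <= s); [|lra]. apply Hlub. intros x Ex.
      destruct (Rle_dec x s); auto. exfalso; apply Hn; exists x; split; auto; lra. }
  assert (Pc : P c).
  { destruct (Req_dec c a) as [->|Hne]; auto. apply Hlim; [lra| exact Hbelow]. }
  destruct (Req_dec c b) as [<-|Hne]; auto.
  destruct (Hext c ltac:(lra) Pc) as [d [Hd Hs]].
  set (c' := c + Rmin d (b - c) / 2).
  assert (Hm1 : Rmin d (b - c) <= d) by apply Rmin_l.
  assert (Hm2 : Rmin d (b - c) <= b - c) by apply Rmin_r.
  assert (Hm3 : 0 < Rmin d (b - c)) by (apply Rmin_glb_lt; lra).
  assert (E c').
  { split; [unfold c'; lra|]. intros s Hs'.
    destruct (Rle_dec s c). { destruct (Req_dec s c) as [->|]; auto. apply Hbelow; lra. }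
    apply Hs; unfold c' in *; lra. }
  assert (c' <= c) by (apply Hub; auto). unfold c' in *; lra.
Qed.

Lemma sum_nonneg (f : nat -> R) m : (forall k, 0 <= f k) -> 0 <= sum_f_R0 f m.
Proof. intros H; induction m; simpl; auto. specialize (H (S m)); lra. Qed.

Lemma sum_term (f : nat -> R) n M : (forall k, 0 <= f k) -> (n <= M)%nat -> f n <= sum_f_R0 f M.
Proof.
  intros H Hn; induction M.
  - inversion Hn; simpl; lra.
  - inversion Hn; subst.
    + simpl. pose proof (sum_nonneg f M H); lra.
    + simpl. specialize (IHM H1). specialize (H (S M)); lra.
Qed.

Lemma sum_mono (f : nat -> R) m M : (forall k, 0 <= f k) -> (m <= M)%nat -> sum_f_R0 f m <= sum_f_R0 f M.
Proof.
  intros H Hn; induction Hn; [lra|]. simpl. specialize (H (S m0)); lra.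
Qed.

Lemma zero_deriv_const (N : R -> Prop) (h : R -> R) (a b L : R) :
  null_set N -> a <= b -> 0 <= L ->
  (forall x y, a <= x <= b -> a <= y <= b -> Rabs (h x - h y) <= L * Rabs (x - y)) ->
  (forall t, a <= t < b -> ~ N t -> forall e, 0 < e ->
     exists d, 0 < d /\ forall y, t < y < t + d -> Rabs (h y - h t) <= e * (y - t)) ->
  h b = h a.
Proof.
  intros HN Hab HL Hlip Hder.
  assert (Key : forall e, 0 < e -> Rabs (h b - h a) <= e * (b - a) + L * e).
  { intros e He.
    destruct (HN e He) as [an [bn [Hle [Hcov Hsum]]]].
    set (l := fun n t => Rmax 0 (Rmin (bn n) t - Rmax (an n) a)).
    assert (l0 : forall n t, 0 <= l n t) by (intros; apply Rmax_l).
    assert (lmono : forall n t t', t <= t' -> l n t <= l n t').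
    { intros n t t' Ht. unfold l, Rmax, Rmin.
      repeat destruct Rle_dec; lra. }
    assert (lb : forall n t, l n t <= bn n - an n).
    { intros n t. specialize (Hle n). unfold l, Rmax, Rmin. repeat destruct Rle_dec; lra. }
    set (Psi := fun m t => sum_f_R0 (fun n => l n t) m).
    assert (Psib : forall m t, Psi m t <= e).
    { intros m t. assert (Hm : Psi m t <= sum_f_R0 (fun k => bn k - an k) m).
      { unfold Psi. clear Hsum. induction m; simpl; [apply lb|]. specialize (lb (S m) t). lra. }
      specialize (Hsum m). lra. }
    assert (Hphi : forall t, {p | is_lub (fun x => exists m, x = Psi m t) p}).
    { intro t. apply completeness.
      - exists e. intros x [m ->]. apply Psib.
      - exists (Psi 0%nat t); eauto. }
    set (Phi := fun t => proj1_sig (Hphi t)).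
    assert (Phiub : forall m t, Psi m t <= Phi t).
    { intros m t. unfold Phi. destruct (proj2_sig (Hphi t)) as [Hp _]. apply Hp; eauto. }
    assert (Phie : forall t, Phi t <= e).
    { intros t. unfold Phi. destruct (proj2_sig (Hphi t)) as [_ Hp]. apply Hp.
      intros x [m ->]. apply Psib. }
    assert (Phi0 : forall t, 0 <= Phi t).
    { intro t. eapply Rle_trans; [|apply (Phiub 0%nat)]. unfold Psi; simpl; apply l0. }
    assert (Phikey : forall n t t', t <= t' -> l n t' - l n t <= Phi t' - Phi t).
    { intros n t t' Ht.
      assert (Phi t <= Phi t' - (l n t' - l n t)); [|lra].
      unfold Phi at 1. destruct (proj2_sig (Hphi t)) as [_ Hp]. apply Hp.
      intros x [m ->].
      pose proof (Phiub (Nat.max m n) t') as H1.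
      assert (Psi m t <= Psi (Nat.max m n) t) by (apply sum_mono; [intro; apply l0| lia]).
      assert (Psi (Nat.max m n) t' - Psi (Nat.max m n) t >= l n t' - l n t).
      { unfold Psi. rewrite <- minus_sum.
        apply Rle_ge. apply (sum_term (fun i => l i t' - l i t)).
        - intro k; specialize (lmono k t t' Ht); lra.
        - lia. }
      lra. }
    assert (Phimono : forall t t', t <= t' -> Phi t <= Phi t').
    { intros t t' Ht; specialize (Phikey 0%nat t t' Ht); specialize (lmono 0%nat t t' Ht); lra. }
    set (P := fun t => Rabs (h t - h a) <= e * (t - a) + L * (Phi t - Phi a)).
    assert (P b).
    { apply real_ind with (a := a); auto.
      - unfold P. replace (h a - h a) with 0 by ring. rewrite Rabs_R0. lra.
      - intros t Ht Hbel. unfold P.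
        destruct (Rle_dec (Rabs (h t - h a)) (e * (t - a) + L * (Phi t - Phi a))) as [|Hn]; auto.
        exfalso. set (D := Rabs (h t - h a) - (e * (t - a) + L * (Phi t - Phi a))).
        assert (HD : 0 < D) by (unfold D; lra).
        set (w := Rmin (t - a) (D / (L + 1)) / 2).
        assert (Hw1 : Rmin (t - a) (D / (L + 1)) <= t - a) by apply Rmin_l.
        assert (Hw2 : Rmin (t - a) (D / (L + 1)) <= D / (L + 1)) by apply Rmin_r.
        assert (Hw3 : 0 < Rmin (t - a) (D / (L + 1))).
        { apply Rmin_glb_lt; [lra| apply Rdiv_lt_0_compat; lra]. }
        assert (Hs := Hbel (t - w) ltac:(unfold w; lra)). unfold P in Hs.
        assert (Hl := Hlip t (t - w) ltac:(lra) ltac:(unfold w; lra)).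
        replace (t - (t - w)) with w in Hl by ring.
        rewrite (Rabs_right w) in Hl by (unfold w; lra).
        assert (Lw : L * w < D).
        { unfold w. assert (L * (D / (L+1)) < D).
          { apply Rmult_lt_reg_r with (L + 1); [lra|].
            replace (L * (D / (L + 1)) * (L + 1)) with (L * D) by (field; lra). nra. }
          assert (L * (Rmin (t - a) (D / (L + 1)) / 2) <= L * (D / (L+1))).
          { apply Rmult_le_compat_l; lra. }
          lra. }
        assert (Phi (t - w) <= Phi t) by (apply Phimono; unfold w; lra).
        pose proof (Rabs_triang (h t - h (t - w)) (h (t - w) - h a)) as Tr.
        replace (h t - h (t - w) + (h (t - w) - h a)) with (h t - h a) in Tr by ring.
        assert (L * Phi (t - w) <= L * Phi t) by (apply Rmult_le_compat_l; lra).
        assert (e * w >= 0) by (apply Rle_ge, Rmult_le_pos; unfold w; lra).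
        assert (HDd : D = Rabs (h t - h a) - (e * (t - a) + L * (Phi t - Phi a))) by reflexivity.
        clearbody D w. lra.
      - intros t Ht Pt. unfold P in *.
        destruct (classic (N t)) as [Nt|Nt].
        + destruct (Hcov t Nt) as [n Hn]. exists (bn n - t). split; [lra|].
          intros s Hs Hsb.
          assert (Hl := Hlip s t ltac:(lra) ltac:(lra)).
          rewrite (Rabs_right (s - t)) in Hl by lra.
          assert (Hls : l n s - l n t = s - t).
          { unfold l, Rmax, Rmin. repeat destruct Rle_dec; lra. }
          assert (Hk := Phikey n t s ltac:(lra)).
          pose proof (Rabs_triang (h s - h t) (h t - h a)) as Tr.
          replace (h s - h t + (h t - h a)) with (h s - h a) in Tr by ring.
          assert (L * (s - t) <= L * (Phi s - Phi t)) by (apply Rmult_le_compat_l; lra).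
          nra.
        + destruct (Hder t Ht Nt e He) as [d [Hd Hy]]. exists d; split; auto.
          intros s Hs Hsb. specialize (Hy s Hs).
          assert (Phi t <= Phi s) by (apply Phimono; lra).
          pose proof (Rabs_triang (h s - h t) (h t - h a)) as Tr.
          replace (h s - h t + (h t - h a)) with (h s - h a) in Tr by ring.
          assert (L * Phi t <= L * Phi s) by (apply Rmult_le_compat_l; lra).
          nra. }
    unfold P in H.
    assert (L * (Phi b - Phi a) <= L * e) by (apply Rmult_le_compat_l; [lra| specialize (Phi0 a); specialize (Phie b); lra]).
    lra. }
  destruct (Req_dec (h b) (h a)) as [|Hne]; auto. exfalso.
  set (D := Rabs (h b - h a)).
  assert (HD : 0 < D) by (apply Rabs_pos_lt; lra).
  set (e := D / (2 * (b - a + L + 1))).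
  assert (He : 0 < e) by (unfold e; apply Rdiv_lt_0_compat; lra).
  specialize (Key e He).
  assert (e * (b - a) + L * e = D / 2 * ((b - a + L) / (b - a + L + 1))) by (unfold e; field; lra).
  assert ((b - a + L) / (b - a + L + 1) < 1).
  { apply Rmult_lt_reg_r with (b - a + L + 1); [lra|]. field_simplify; lra. }
  assert (0 <= (b - a + L) / (b - a + L + 1)) by (apply Rmult_le_pos; [lra| left; apply Rinv_0_lt_compat; lra]).
  fold D in Key. nra.
Qed.

Lemma density (N : R -> Prop) c d : null_set N -> c < d -> exists s, c < s < d /\ ~ N s.
Proof.
  intros HN Hcd. apply NNPP; intro Hn.
  assert (HA : forall s, c < s < d -> N s).
  { intros s Hs. apply NNPP; intro. apply Hn; eauto. }
  assert (E := zero_deriv_const N (fun x => x) (c + (d - c)/3) (c + 2*(d-c)/3) 1 HN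
     ltac:(lra) ltac:(lra)).
  assert (c + 2 * (d - c) / 3 = c + (d - c) / 3); [|lra].
  apply E.
  - intros; lra.
  - intros t Ht Nt. exfalso; apply Nt, HA; lra.
Qed.

Lemma deriv_right (h : R -> R) t : derivable_pt_lim h t 0 -> forall e, 0 < e ->
  exists d, 0 < d /\ forall y, t < y < t + d -> Rabs (h y - h t) <= e * (y - t).
Proof.
  intros Hd e He. destruct (Hd e He) as [del Hdel]. exists del; split; [apply cond_pos|].
  intros y Hy. specialize (Hdel (y - t) ltac:(lra) ltac:(rewrite Rabs_right; lra)).
  replace (t + (y - t)) with y in Hdel by ring.
  rewrite Rminus_0_r in Hdel.
  replace (h y - h t) with ((h y - h t) / (y - t) * (y - t)) by (field; lra).
  rewrite Rabs_mult, (Rabs_right (y - t)) by lra.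
  left. apply Rmult_lt_compat_r; lra.
Qed.

Lemma deriv_loc_const (f : R -> R) x d : 0 < d -> (forall y, Rabs (y - x) < d -> f y = f x) ->
  derivable_pt_lim f x 0.
Proof.
  intros Hd H e He. exists (mkposreal d Hd). intros hh Hh Hhd. simpl in Hhd.
  rewrite H by (replace (x + hh - x) with hh by ring; auto).
  replace ((f x - f x) / hh - 0) with 0 by (field; auto). rewrite Rabs_R0; auto.
Qed.

Lemma lip_pos f : lipschitz01 f -> exists L, 0 <= L /\ forall s t, 0 <= s <= 1 -> 0 <= t <= 1 ->
    Rabs (f s - f t) <= L * Rabs (s - t).
Proof.
  intros [L HL]. exists (Rabs L). split; [apply Rabs_pos|]. intros s t Hs Ht.
  eapply Rle_trans; [apply HL; auto|]. apply Rmult_le_compat_r; [apply Rabs_pos| apply Rle_abs].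
Qed.

Lemma deriv_sub f F x l : derivable_pt_lim f x l -> derivable_pt_lim F x l ->
  derivable_pt_lim (fun s => f s - F s) x 0.
Proof.
  intros H1 H2. replace 0 with (l - l) by ring. exact (derivable_pt_lim_minus f F x l l H1 H2).
Qed.

Lemma dF3 k Th th t : derivable_pt_lim (fun s => k * (1 - cos (Th * s - th))) t (k * (Th * sin (Th * t - th))).
Proof. apply is_derive_Reals. auto_derive; auto; unfold Rminus; ring. Qed.
Lemma dlin k t : derivable_pt_lim (fun s => k * s) t k.
Proof. apply is_derive_Reals. auto_derive; auto; unfold Rminus; ring. Qed.

Lemma deriv_add f F x l : derivable_pt_lim f x (- l) -> derivable_pt_lim F x l ->
  derivable_pt_lim (fun s => f s + F s) x 0.
Proof.
  intros H1 H2. replace 0 with (- l + l) by ring. exact (derivable_pt_lim_plus f F x _ _ H1 H2).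
Qed.

Lemma dval f x l l' : derivable_pt_lim f x l -> l = l' -> derivable_pt_lim f x l'.
Proof. intros H ->; exact H. Qed.

Lemma hcmp Th X p u v : 0 < Th -> Th * (X + p * u) <= Th * (X + p * v) -> p * u <= p * v.
Proof. intros HT H. apply Rmult_le_reg_l in H; auto. lra. Qed.

Lemma abs_small_zero x : (forall g, 0 < g -> Rabs x <= g) -> x = 0.
Proof.
  intros H. destruct (Req_dec x 0) as [|Hn]; auto. exfalso.
  assert (Hp : 0 < Rabs x) by (apply Rabs_pos_lt; auto).
  specialize (H (Rabs x / 2) ltac:(lra)). lra.
Qed.

Lemma lipF3 k Th th x y : 0 < Th ->
  Rabs (k * (1 - cos (Th * x - th)) - k * (1 - cos (Th * y - th))) <= Rabs k * Th * Rabs (x - y).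
Proof.
  intros HT.
  destruct (MVT_abs (fun s => k * (1 - cos (Th * s - th))) (fun c => k * (Th * sin (Th * c - th))) y x
     (fun c _ => dF3 k Th th c)) as [c [E _]].
  rewrite E. apply Rmult_le_compat_r; [apply Rabs_pos|].
  rewrite !Rabs_mult, (Rabs_right Th) by lra.
  assert (Rabs (sin (Th * c - th)) <= 1) by (apply Rabs_le; apply SIN_bound).
  assert (0 <= Rabs k) by apply Rabs_pos.
  rewrite <- Rmult_assoc. rewrite <- (Rmult_1_r (Rabs k * Th)) at 2.
  apply Rmult_le_compat_l; [nra| auto].
Qed.

Lemma cos_lt1 x : -PI < x < 0 -> cos x < 1.
Proof.
  intros Hx. rewrite <- (cos_neg x), <- cos_0. apply cos_decreasing_1; lra.
Qed.

Theorem mainTheorem15 :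
  forall (th Th : R), 0 < th < PI -> th < Th ->
  forall (a0 b01 b02 b03 b11 b12 b13 : R) (psi1 psi2 psi3 psiT : R -> R),
    in_Lambda th Th a0 b01 b02 b03 b11 b12 b13 psi1 psi2 psi3 psiT ->
    0 < a0 /\
    (forall s, 0 <= s < th / Th ->
       H_u (psi1 s) (psi2 s) (psi3 s) (x1hat th Th s) (x2hat th Th s)
           (x3hat th Th s) Th (uhat th Th s) < 0).
Proof.
  intros th Th Hth HTh a0 b01 b02 b03 b11 b12 b13 psi1 psi2 psi3 psiT HL.
  destruct HL as (Ha0 & Hnorm & Lp1 & Lp2 & Lp3 & LpT & [N1 [HN1 Had]] & e01 & e02 & e03
     & e11 & e12 & e13 & eT0 & eT1 & [N2 [HN2 Hmin]]).
  destruct (lip_pos _ Lp1) as [L1 [L1p HL1]].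
  destruct (lip_pos _ Lp2) as [L2 [L2p HL2]].
  destruct (lip_pos _ Lp3) as [L3 [L3p HL3]].
  destruct (lip_pos _ LpT) as [LT [LTp HLT]].
  assert (HT0 : 0 < Th) by lra.
  assert (Htau0 : 0 < th / Th) by (apply Rdiv_lt_0_compat; lra).
  assert (Htau1 : th / Th < 1).
  { apply Rmult_lt_reg_r with Th; auto. field_simplify; lra. }
  assert (Htt : Th * (th / Th) = th) by (field; lra).
  assert (S := sin2_cos2 th). unfold Rsqr in S.
  assert (Ad : forall s, 0 <= s <= 1 -> ~ N1 s ->
     derivable_pt_lim psi1 s 0 /\ derivable_pt_lim psi2 s 0 /\
     derivable_pt_lim psi3 s (Th * (psi1 s * cos (x3hat th Th s) + psi2 s * sin (x3hat th Th s))) /\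
     derivable_pt_lim psiT s (- (- psi1 s * sin (x3hat th Th s) + psi2 s * cos (x3hat th Th s)
                                 + psi3 s * uhat th Th s))).
  { intros s Hs Ns. destruct (Had s Hs Ns) as (A & B & C & D).
    unfold H_x1, H_x2, H_x3, H_T in *.
    split; [|split; [|split]].
    - eapply dval; [exact A| ring].
    - eapply dval; [exact B| ring].
    - eapply dval; [exact C| ring].
    - eapply dval; [exact D| ring]. }
  assert (C1 : forall s, 0 <= s <= 1 -> psi1 s = psi1 0).
  { intros s Hs. apply (zero_deriv_const N1 psi1 0 s L1 HN1); try lra.
    - intros x y Hx Hy; apply HL1; lra.
    - intros t Ht Nt. apply deriv_right. apply (Ad t ltac:(lra) Nt). }
  assert (C2 : forall s, 0 <= s <= 1 -> psi2 s = psi2 0).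
  { intros s Hs. apply (zero_deriv_const N1 psi2 0 s L2 HN1); try lra.
    - intros x y Hx Hy; apply HL2; lra.
    - intros t Ht Nt. apply deriv_right. apply (Ad t ltac:(lra) Nt). }
  set (P1 := psi1 0) in *. set (P2 := psi2 0) in *.
  assert (Z : forall s, th / Th < s <= 1 -> ~ N2 s -> psi3 s = 0).
  { intros s Hs Ns. pose proof (Hmin s ltac:(lra) Ns) as M.
    unfold Href, Hpre, uhat in M.
    destruct (Rle_dec s (th / Th)); [lra|].
    pose proof (hcmp _ _ _ _ _ HT0 (M 1 ltac:(lra))).
    pose proof (hcmp _ _ _ _ _ HT0 (M (-1) ltac:(lra))). lra. }
  assert (Z2 : forall s, th / Th <= s <= 1 -> psi3 s = 0).
  { intros s Hs. apply abs_small_zero. intros g Hg.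
    set (w := g / (L3 + 1)).
    assert (Hw : 0 < w) by (unfold w; apply Rdiv_lt_0_compat; lra).
    assert (Hlw : L3 * w <= g).
    { unfold w. apply Rmult_le_reg_r with (L3 + 1); [lra|].
      replace (L3 * (g / (L3 + 1)) * (L3 + 1)) with (L3 * g) by (field; lra). nra. }
    destruct (density N2 (Rmax (th / Th) (s - w)) (Rmin 1 (s + w)) HN2) as [s' [Hs' Ns']].
    { unfold Rmax, Rmin; repeat destruct Rle_dec; lra. }
    assert (Hb1 : th / Th < s' <= 1 /\ s - w < s' < s + w).
    { revert Hs'. unfold Rmax, Rmin; repeat destruct Rle_dec; intros; lra. }
    pose proof (HL3 s s' ltac:(lra) ltac:(lra)) as HH.
    rewrite (Z s' ltac:(lra) Ns'), Rminus_0_r in HH.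
    assert (Rabs (s - s') <= w) by (apply Rabs_le; lra).
    nra. }
  assert (B : P1 * cos th + P2 * sin th = 0).
  { destruct (density N1 (th / Th) 1 HN1 Htau1) as [s0 [Hs0 Ns0]].
    destruct (Ad s0 ltac:(lra) Ns0) as (_ & _ & D3 & _).
    assert (D0 : derivable_pt_lim psi3 s0 0).
    { apply deriv_loc_const with (Rmin (s0 - th / Th) (1 - s0)).
      - apply Rmin_glb_lt; lra.
      - intros y Hy. assert (Hm1 := Rmin_l (s0 - th / Th) (1 - s0)).
        assert (Hm2 := Rmin_r (s0 - th / Th) (1 - s0)).
        apply Rabs_def2 in Hy. rewrite !Z2; lra. }
    pose proof (uniqueness_limite _ _ _ _ D3 D0) as E.
    unfold x3hat in E. destruct (Rle_dec s0 (th / Th)); [lra|].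
    rewrite (C1 s0), (C2 s0) in E by lra.
    apply Rmult_integral in E. destruct E; [lra| auto]. }
  set (k := - P1 * sin th + P2 * cos th).
  assert (HP1 : P1 = - k * sin th).
  { assert (E : P1 + k * sin th = P1 * (1 - (sin th * sin th + cos th * cos th))
        + cos th * (P1 * cos th + P2 * sin th)) by (unfold k; ring).
    rewrite S, B in E. lra. }
  assert (HP2 : P2 = k * cos th).
  { assert (E : P2 - k * cos th = P2 * (1 - (sin th * sin th + cos th * cos th))
        + sin th * (P1 * cos th + P2 * sin th)) by (unfold k; ring).
    rewrite S, B in E. lra. }
  clearbody k.
  assert (C3 : forall s, 0 <= s <= th / Th -> psi3 s = k * (1 - cos (Th * s - th))).
  { intros s Hs.
    assert (E : (fun s => psi3 s - k * (1 - cos (Th * s - th))) (th / Th)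
              = (fun s => psi3 s - k * (1 - cos (Th * s - th))) s).
    { refine (zero_deriv_const N1 (fun s => psi3 s - k * (1 - cos (Th * s - th))) s (th / Th) (L3 + Rabs k * Th) HN1 _ _ _ _); try lra.
      - assert (0 <= Rabs k) by apply Rabs_pos. nra.
      - intros x y Hx Hy.
        replace (psi3 x - k * (1 - cos (Th * x - th)) - (psi3 y - k * (1 - cos (Th * y - th))))
          with ((psi3 x - psi3 y) - (k * (1 - cos (Th * x - th)) - k * (1 - cos (Th * y - th)))) by ring.
        eapply Rle_trans; [apply Rabs_triang|]. rewrite Rabs_Ropp.
        pose proof (HL3 x y ltac:(lra) ltac:(lra)). pose proof (lipF3 k Th th x y HT0). lra.
      - intros t Ht Nt. refine (deriv_right (fun s => psi3 s - k * (1 - cos (Th * s - th))) t _). refine (deriv_sub psi3 (fun s => k * (1 - cos (Th * s - th))) t (k * (Th * sin (Th * t - th))) _ _).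
        + destruct (Ad t ltac:(lra) Nt) as (_ & _ & D3 & _).
          eapply dval; [exact D3|].
          unfold x3hat. destruct (Rle_dec t (th / Th)); [|lra].
          rewrite (C1 t), (C2 t) by lra. fold P1 P2. rewrite sin_minus, HP1, HP2. ring.
        + apply dF3. }
    simpl in E. rewrite Htt, Z2 in E by lra.
    replace (th - th) with 0 in E by ring. rewrite cos_0 in E. lra. }
  assert (Kle : k <= 0).
  { destruct (density N2 0 (th / Th) HN2 Htau0) as [s1 [Hs1 Ns1]].
    pose proof (Hmin s1 ltac:(lra) Ns1) as M.
    unfold Href, Hpre, uhat in M.
    destruct (Rle_dec s1 (th / Th)); [|lra].
    pose proof (hcmp _ _ _ _ _ HT0 (M (-1) ltac:(lra))) as Hp.
    rewrite C3 in Hp by lra.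
    assert (cos (Th * s1 - th) < 1).
    { apply cos_lt1. split; [|].
      - assert (0 < Th * s1) by nra. lra.
      - assert (Th * s1 < th) by (rewrite <- Htt; apply Rmult_lt_compat_l; lra). lra. }
    nra. }
  assert (KT : k = - a0).
  { assert (E : (fun s => psiT s + k * s) 1 = (fun s => psiT s + k * s) 0).
    { refine (zero_deriv_const N1 (fun s => psiT s + k * s) 0 1 (LT + Rabs k) HN1 _ _ _ _); try lra.
      - assert (0 <= Rabs k) by apply Rabs_pos. lra.
      - intros x y Hx Hy.
        replace (psiT x + k * x - (psiT y + k * y)) with ((psiT x - psiT y) + k * (x - y)) by ring.
        eapply Rle_trans; [apply Rabs_triang|]. rewrite Rabs_mult.
        pose proof (HLT x y Hx Hy). lra.
      - intros t Ht Nt. refine (deriv_right (fun s => psiT s + k * s) t _). refine (deriv_add psiT (fun s => k * s) t k _ (dlin k t)).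
        destruct (Ad t ltac:(lra) Nt) as (_ & _ & _ & DT).
        eapply dval; [exact DT|].
        rewrite (C1 t), (C2 t) by lra. fold P1 P2. rewrite HP1, HP2.
        unfold x3hat, uhat. destruct (Rle_dec t (th / Th)).
        + rewrite C3 by lra. rewrite cos_minus. ring.
        + rewrite Z2 by lra.
          replace (- (- (- k * sin th) * sin th + k * cos th * cos th + 0 * 0))
            with (- k * (sin th * sin th + cos th * cos th)) by ring.
          rewrite S. ring. }
    simpl in E. rewrite eT1, eT0 in E. lra. }
  assert (Klt : k < 0).
  { destruct (Req_dec k 0) as [Hk|]; [|lra]. exfalso.
    assert (a0 = 0) by lra.
    assert (P1 = 0) by (rewrite HP1, Hk; ring).
    assert (P2 = 0) by (rewrite HP2, Hk; ring).
    assert (psi3 0 = 0) by (rewrite C3 by lra; rewrite Hk; ring).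
    assert (psi3 1 = 0) by (apply Z2; lra).
    assert (X1 : b01 = 0) by (unfold P1 in *; lra).
    assert (X2 : b02 = 0) by (unfold P2 in *; lra).
    assert (X3 : b03 = 0) by lra.
    assert (X4 : b11 = 0) by (rewrite <- e11, C1 by lra; auto).
    assert (X5 : b12 = 0) by (rewrite <- e12, C2 by lra; auto).
    assert (X6 : b13 = 0) by lra.
    rewrite X1, X2, X3, X4, X5, X6 in Hnorm.
    replace (0 ^ 2 + 0 ^ 2 + 0 ^ 2) with 0 in Hnorm by ring.
    rewrite sqrt_0 in Hnorm. lra. }
  split; [lra|].
  intros s Hs. unfold H_u. rewrite C3 by lra.
  assert (cos (Th * s - th) < 1).
  { apply cos_lt1. split.
    - assert (0 <= Th * s) by nra. lra.
    - assert (Th * s < th) by (rewrite <- Htt; apply Rmult_lt_compat_l; lra). lra. }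
  assert (k * (1 - cos (Th * s - th)) < 0) by nra.
  nra.
Qed.
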